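(* Let $f,g\in\mathbb{R}[x_1,\dots,x_n]$ be forms, where $f$ is nonconstant with strictly positive coefficients and $g(x)>0$ for all $x\in\mathbb{R}_+^n\setminus\{0\}$. Then there exists an integer $l\ge1$ such that $f^lg$ has strictly positive coefficients.
   Context: A form is a homogeneous polynomial. A form $f=\sum_{|w|=d}a_wx^w$ of degree $d$ has strictly positive coefficients if $a_w>0$ for every $w\in\mathbb{Z}_{\ge0}^n$ with $|w|=d$. $\mathbb{R}_+^n=\{x\in\mathbb{R}^n: x_i\ge0\ \forall i\}$. *)

(* Defs.v *)
(* real polynomials in n variables x_1..x_n, represented
   as finite lists of terms (coefficient, exponent vector). *)
From Stdlib Require Import Reals List Arith.
Import ListNotations.
Open Scope R_scope.

Definition mono := list nat.
Definition mpoly := list (R * mono).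

Definition is_poly (n : nat) (p : mpoly) : Prop :=
  Forall (fun t => length (snd t) = n) p.

Definition deg (w : mono) : nat := fold_right Nat.add 0%nat w.

Fixpoint coef (p : mpoly) (w : mono) : R :=
  match p with
  | [] => 0
  | (c, u) :: p' =>
      if list_eq_dec Nat.eq_dec u w then c + coef p' w else coef p' w
  end.

Fixpoint vadd (u v : mono) : mono :=
  match u, v with
  | a :: u', b :: v' => (a + b)%nat :: vadd u' v'
  | _, _ => []
  end.

Definition pmul (p q : mpoly) : mpoly :=
  flat_map (fun t => map (fun s => (fst t * fst s, vadd (snd t) (snd s))) q) p.

Definition pone (n : nat) : mpoly := [(1, repeat 0%nat n)].

Fixpoint ppow (n : nat) (p : mpoly) (l : nat) : mpoly :=
  match l with
  | O => pone n
  | S l' => pmul p (ppow n p l')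
  end.

Fixpoint meval (x : list R) (w : mono) : R :=
  match x, w with
  | a :: x', k :: w' => a ^ k * meval x' w'
  | _, _ => 1
  end.

Definition peval (p : mpoly) (x : list R) : R :=
  fold_right Rplus 0 (map (fun t => fst t * meval x (snd t)) p).

Definition is_form (n d : nat) (p : mpoly) : Prop :=
  is_poly n p /\ forall w, coef p w <> 0 -> deg w = d.

Definition nonconstant (p : mpoly) : Prop :=
  exists w, coef p w <> 0 /\ deg w <> 0%nat.

Definition strictly_pos_coefs (n d : nat) (p : mpoly) : Prop :=
  forall w : mono, length w = n -> deg w = d -> 0 < coef p w.

Definition in_Rplus_nonzero (n : nat) (x : list R) : Prop :=
  length x = n /\ Forall (fun t => 0 <= t) x /\ exists t, In t x /\ t <> 0.

(* Main.v *)
Require Import Defs.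
From Stdlib Require Import Reals List Arith Lra Lia Psatz.
Import ListNotations.
Open Scope R_scope.

Definition sumL {A} (l : list A) (F : A -> R) : R :=
  fold_right (fun a acc => F a + acc) 0 l.

Lemma sumL_nil {A} (F : A -> R) : sumL [] F = 0.
Proof. reflexivity. Qed.
Lemma sumL_cons {A} a l (F : A -> R) : sumL (a :: l) F = F a + sumL l F.
Proof. reflexivity. Qed.

Lemma sumL_app {A} (l1 l2 : list A) F : sumL (l1 ++ l2) F = sumL l1 F + sumL l2 F.
Proof. induction l1; simpl; [lra|]. unfold sumL in *; simpl. rewrite IHl1; lra. Qed.

Lemma sumL_map {A B} (g : A -> B) l F : sumL (map g l) F = sumL l (fun a => F (g a)).
Proof. induction l; simpl; auto. unfold sumL in *; simpl; rewrite IHl; auto. Qed.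

Lemma sumL_flat_map {A B} (G : A -> list B) l F :
  sumL (flat_map G l) F = sumL l (fun a => sumL (G a) F).
Proof. induction l; simpl; auto. rewrite sumL_app, IHl; auto. Qed.

Lemma sumL_ext {A} (l : list A) F G : (forall a, In a l -> F a = G a) -> sumL l F = sumL l G.
Proof. induction l; intros H; simpl; auto. unfold sumL in *; simpl.
  rewrite H by (left; auto). f_equal. apply IHl. intros; apply H; right; auto. Qed.

Lemma sumL_plus {A} (l : list A) F G : sumL l (fun a => F a + G a) = sumL l F + sumL l G.
Proof. induction l; simpl; [unfold sumL; simpl; lra|]. unfold sumL in *; simpl. rewrite IHl; lra. Qed.

Lemma sumL_scal {A} (l : list A) c F : sumL l (fun a => c * F a) = c * sumL l F.
Proof. induction l; simpl; [unfold sumL; simpl; lra|]. unfold sumL in *; simpl. rewrite IHl; lra. Qed.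

Lemma sumL_zero {A} (l : list A) : sumL l (fun _ => 0) = 0.
Proof. induction l; simpl; auto. unfold sumL in *; simpl; rewrite IHl; lra. Qed.

Lemma sumL_swap {A B} (l1 : list A) (l2 : list B) F :
  sumL l1 (fun a => sumL l2 (fun b => F a b)) = sumL l2 (fun b => sumL l1 (fun a => F a b)).
Proof. induction l1.
  - simpl. rewrite sumL_zero; auto.
  - rewrite sumL_cons, IHl1, <- sumL_plus. apply sumL_ext; intros; rewrite sumL_cons; auto. Qed.

Lemma sumL_le {A} (l : list A) F G : (forall a, In a l -> F a <= G a) -> sumL l F <= sumL l G.
Proof. induction l; intros H; simpl; [unfold sumL; simpl; lra|]. unfold sumL in *; simpl.
  assert (F a <= G a) by (apply H; left; auto).
  assert (fold_right (fun a0 acc => F a0 + acc) 0 l <= fold_right (fun a0 acc => G a0 + acc) 0 l)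
    by (apply IHl; intros; apply H; right; auto). lra. Qed.

Lemma sumL_nonneg {A} (l : list A) F : (forall a, In a l -> 0 <= F a) -> 0 <= sumL l F.
Proof. intros H. rewrite <- (sumL_zero l). apply sumL_le; auto. Qed.

Lemma sumL_nz {A} (l : list A) F : sumL l F <> 0 -> exists a, In a l /\ F a <> 0.
Proof. induction l; simpl; intros H. - unfold sumL in H; simpl in H; lra.
  - unfold sumL in H; simpl in H. destruct (Req_dec (F a) 0).
    + destruct IHl as [x [Hx Hf]]. unfold sumL; lra. exists x; auto.
    + exists a; auto. Qed.

Lemma sumL_abs {A} (l : list A) F : Rabs (sumL l F) <= sumL l (fun a => Rabs (F a)).
Proof. induction l; simpl. unfold sumL; simpl; rewrite Rabs_R0; lra.
  unfold sumL in *; simpl. eapply Rle_trans. apply Rabs_triang. lra. Qed.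

Definition ind (u w : mono) : R := if list_eq_dec Nat.eq_dec u w then 1 else 0.

Lemma coef_sumL p w : coef p w = sumL p (fun t => fst t * ind (snd t) w).
Proof. induction p as [|[c u] p IH]; simpl; auto. rewrite IH. unfold ind.
  destruct (list_eq_dec Nat.eq_dec u w); lra. Qed.

Lemma coef_app p q w : coef (p ++ q) w = coef p w + coef q w.
Proof. rewrite !coef_sumL, sumL_app; auto. Qed.

Definition scale (c : R) (p : mpoly) : mpoly := map (fun t => (c * fst t, snd t)) p.
Lemma coef_scale c p w : coef (scale c p) w = c * coef p w.
Proof. unfold scale; rewrite !coef_sumL, sumL_map, <- sumL_scal. apply sumL_ext; intros; simpl; lra. Qed.

Lemma coef_pmul p q w : coef (pmul p q) w =
  sumL p (fun t => sumL q (fun s => fst t * fst s * ind (vadd (snd t) (snd s)) w)).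
Proof. unfold pmul. rewrite coef_sumL, sumL_flat_map. apply sumL_ext; intros t _.
  rewrite sumL_map. apply sumL_ext; intros; simpl; auto. Qed.

Lemma sumL_ind_single (U : list mono) x G : NoDup U -> In x U ->
  sumL U (fun u => ind x u * G u) = G x.
Proof. induction U; intros Hn Hi; [destruct Hi|]. inversion Hn; subst.
  rewrite sumL_cons. unfold ind at 1. destruct (list_eq_dec Nat.eq_dec x a).
  - subst. rewrite (sumL_ext U _ (fun _ => 0)). rewrite sumL_zero; lra.
    intros b Hb. unfold ind. destruct (list_eq_dec Nat.eq_dec a b); [subst; contradiction|lra].
  - destruct Hi; [subst; congruence|]. rewrite IHU; auto; lra. Qed.

Lemma support p (U : list mono) H : NoDup U -> (forall t, In t p -> In (snd t) U) ->
  sumL p (fun t => fst t * H (snd t)) = sumL U (fun u => coef p u * H u).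
Proof. intros Hn. induction p as [|t p IH]; intros Hin.
  - rewrite (sumL_ext U _ (fun _ => 0)); [rewrite sumL_zero; auto|]. intros; simpl; lra.
  - rewrite sumL_cons, IH by (intros; apply Hin; right; auto).
    rewrite (sumL_ext U (fun u => coef (t :: p) u * H u)
      (fun u => fst t * (ind (snd t) u * H u) + coef p u * H u)).
    rewrite sumL_plus, sumL_scal, sumL_ind_single; auto. apply Hin; left; auto.
    intros u _. destruct t as [c v]; simpl. unfold ind; simpl.
    destruct (list_eq_dec Nat.eq_dec v u); lra. Qed.

Definition supp (p : mpoly) : list mono := nodup (list_eq_dec Nat.eq_dec) (map snd p).
Lemma supp_nodup p : NoDup (supp p). Proof. apply NoDup_nodup. Qed.
Lemma supp_in p t : In t p -> In (snd t) (supp p).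
Proof. intros; unfold supp; apply nodup_In, in_map; auto. Qed.
Lemma supp2_in p q t : In t p -> In (snd t) (supp (p ++ q)).
Proof. intros; apply supp_in, in_or_app; auto. Qed.
Lemma supp2_in' p q t : In t q -> In (snd t) (supp (p ++ q)).
Proof. intros; apply supp_in, in_or_app; auto. Qed.

Lemma coef_pmul_supp p q U V w : NoDup U -> NoDup V ->
  (forall t, In t p -> In (snd t) U) -> (forall t, In t q -> In (snd t) V) ->
  coef (pmul p q) w = sumL U (fun u => sumL V (fun u' => coef p u * coef q u' * ind (vadd u u') w)).
Proof. intros HU HV Hp Hq. rewrite coef_pmul.
  rewrite (sumL_ext p _ (fun t => fst t * sumL q (fun s => fst s * ind (vadd (snd t) (snd s)) w))).
  2:{ intros; rewrite <- sumL_scal; apply sumL_ext; intros; lra. }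
  rewrite (support p U (fun u => sumL q (fun s => fst s * ind (vadd u (snd s)) w))); auto. apply sumL_ext; intros u _.
  rewrite (support q V (fun u' => ind (vadd u u') w)); auto.
  rewrite <- sumL_scal; apply sumL_ext; intros; lra. Qed.

Definition eqv (p q : mpoly) := forall w, coef p w = coef q w.
Definition ple (p q : mpoly) := forall w, coef p w <= coef q w.

Lemma pmul_eqv_l p p' q : eqv p p' -> eqv (pmul p q) (pmul p' q).
Proof. intros H w. rewrite !(coef_pmul_supp _ _ (supp (p ++ p')) (supp q)); auto using supp_nodup, supp_in, supp2_in, supp2_in'.
  apply sumL_ext; intros; apply sumL_ext; intros; rewrite H; auto. Qed.

Lemma pmul_eqv_r p q q' : eqv q q' -> eqv (pmul p q) (pmul p q').
Proof. intros H w. rewrite !(coef_pmul_supp _ _ (supp p) (supp (q ++ q'))); auto using supp_nodup, supp_in, supp2_in, supp2_in'.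
  apply sumL_ext; intros; apply sumL_ext; intros; rewrite H; auto. Qed.

Lemma pmul_nonneg p q : ple [] p -> ple [] q -> ple [] (pmul p q).
Proof. intros Hp Hq w. simpl. rewrite (coef_pmul_supp _ _ (supp p) (supp q)); auto using supp_nodup, supp_in.
  apply sumL_nonneg; intros; apply sumL_nonneg; intros.
  specialize (Hp a); specialize (Hq a0); simpl in *.
  assert (0 <= ind (vadd a a0) w) by (unfold ind; destruct list_eq_dec; lra).
  apply Rmult_le_pos; auto. apply Rmult_le_pos; auto. Qed.

Lemma pmul_mono_r r p q : ple [] r -> ple p q -> ple (pmul r p) (pmul r q).
Proof. intros Hr H w. rewrite !(coef_pmul_supp _ _ (supp r) (supp (p ++ q))); auto using supp_nodup, supp_in, supp2_in, supp2_in'.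
  apply sumL_le; intros; apply sumL_le; intros.
  specialize (Hr a); specialize (H a0); simpl in *.
  assert (0 <= ind (vadd a a0) w) by (unfold ind; destruct list_eq_dec; lra).
  apply Rmult_le_compat_r; auto. apply Rmult_le_compat_l; auto. Qed.

Lemma vadd_comm u v : vadd u v = vadd v u.
Proof. revert v; induction u; destruct v; simpl; auto. rewrite IHu, Nat.add_comm; auto. Qed.

Lemma vadd_assoc u v x : vadd (vadd u v) x = vadd u (vadd v x).
Proof. revert v x; induction u; destruct v, x; simpl; auto. rewrite IHu, Nat.add_assoc; auto. Qed.

Lemma pmul_comm p q : eqv (pmul p q) (pmul q p).
Proof. intros w. rewrite !coef_pmul, sumL_swap. apply sumL_ext; intros; apply sumL_ext; intros.
  rewrite vadd_comm; lra. Qed.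

Lemma sumL_pmul p q F : sumL (pmul p q) F =
  sumL p (fun t => sumL q (fun s => F (fst t * fst s, vadd (snd t) (snd s)))).
Proof. unfold pmul; rewrite sumL_flat_map. apply sumL_ext; intros; rewrite sumL_map; auto. Qed.

Lemma pmul_assoc p q r : eqv (pmul (pmul p q) r) (pmul p (pmul q r)).
Proof. intros w. rewrite !coef_pmul. rewrite sumL_pmul. apply sumL_ext; intros t _.
  rewrite (sumL_ext (pmul q r) _ (fun x => fst t * (fst x * ind (vadd (snd t) (snd x)) w))).
  2:{ intros; lra. } rewrite sumL_scal, sumL_pmul, <- sumL_scal. apply sumL_ext; intros s _.
  rewrite <- sumL_scal. apply sumL_ext; intros; simpl. rewrite vadd_assoc; lra. Qed.

Lemma pmul_app_l p q r : eqv (pmul (p ++ q) r) (pmul p r ++ pmul q r).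
Proof. intros w; rewrite coef_app, !coef_pmul, sumL_app; auto. Qed.

Lemma pmul_app_r p q r : eqv (pmul r (p ++ q)) (pmul r p ++ pmul r q).
Proof. intros w; rewrite coef_app, !coef_pmul, <- sumL_plus. apply sumL_ext; intros; rewrite sumL_app; auto. Qed.

Lemma pmul_scale_l c p q : eqv (pmul (scale c p) q) (scale c (pmul p q)).
Proof. intros w; rewrite coef_scale, !coef_pmul. unfold scale; rewrite sumL_map, <- sumL_scal.
  apply sumL_ext; intros; rewrite <- sumL_scal; apply sumL_ext; intros; simpl; lra. Qed.

Lemma pmul_scale_r c p q : eqv (pmul q (scale c p)) (scale c (pmul q p)).
Proof. intros w. rewrite pmul_comm, pmul_scale_l, !coef_scale, pmul_comm; auto. Qed.

Lemma pmul_mono_l r p q : ple [] r -> ple p q -> ple (pmul p r) (pmul q r).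
Proof. intros Hr H w. rewrite (pmul_comm p), (pmul_comm q). apply pmul_mono_r; auto. Qed.

Definition isF (n D : nat) (p : mpoly) := forall w, coef p w <> 0 -> length w = n /\ deg w = D.

Lemma ind_nz u w : ind u w <> 0 -> u = w.
Proof. unfold ind; destruct list_eq_dec; auto; lra. Qed.

Lemma coef_nz_in p w : coef p w <> 0 -> exists t, In t p /\ snd t = w.
Proof. rewrite coef_sumL. intros H; apply sumL_nz in H as [t [Ht Hf]].
  exists t; split; auto. apply ind_nz. intros E; rewrite E in Hf; lra. Qed.

Lemma is_poly_len n p w : is_poly n p -> coef p w <> 0 -> length w = n.
Proof. intros Hp H. apply coef_nz_in in H as [t [Ht E]]. subst.
  unfold is_poly in Hp; rewrite Forall_forall in Hp; auto. Qed.

Lemma form_isF n d p : is_form n d p -> isF n d p.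
Proof. intros [Hp Hd] w H; split; auto. eapply is_poly_len; eauto. Qed.

Lemma vadd_len u v : length u = length v -> length (vadd u v) = length u.
Proof. revert v; induction u; destruct v; simpl; intros; auto; discriminate. Qed.

Lemma vadd_deg u v : length u = length v -> deg (vadd u v) = (deg u + deg v)%nat.
Proof. revert v; induction u; destruct v; simpl; intros; auto; try discriminate.
  rewrite IHu by lia. lia. Qed.

Lemma isF_pmul n a b p q : isF n a p -> isF n b q -> isF n (a + b) (pmul p q).
Proof. intros Hp Hq w H. rewrite (coef_pmul_supp _ _ (supp p) (supp q)) in H; auto using supp_nodup, supp_in.
  apply sumL_nz in H as [u [_ H]]. apply sumL_nz in H as [u' [_ H]].
  assert (coef p u <> 0) by (intro E; rewrite E in H; lra).
  assert (coef q u' <> 0) by (intro E; rewrite E in H; lra).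
  assert (ind (vadd u u') w <> 0) by (intro E; rewrite E in H; lra).
  apply ind_nz in H2. subst. destruct (Hp _ H0), (Hq _ H1).
  rewrite vadd_len, vadd_deg; lia. Qed.

Lemma isF_app n D p q : isF n D p -> isF n D q -> isF n D (p ++ q).
Proof. intros Hp Hq w H; rewrite coef_app in H.
  destruct (Req_dec (coef p w) 0). apply Hq; lra. apply Hp; auto. Qed.

Lemma isF_scale n D c p : isF n D p -> isF n D (scale c p).
Proof. intros Hp w H; rewrite coef_scale in H. apply Hp. intro E; rewrite E in H; lra. Qed.

Lemma isF_eqv n D p q : eqv p q -> isF n D p -> isF n D q.
Proof. intros E H w Hw. apply H. rewrite E; auto. Qed.

Lemma is_poly_pmul n p q : is_poly n p -> is_poly n q -> is_poly n (pmul p q).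
Proof. unfold is_poly, pmul; rewrite !Forall_forall; intros Hp Hq x Hx.
  apply in_flat_map in Hx as [t [Ht Hx]]. apply in_map_iff in Hx as [s [E Hs]]. subst; simpl.
  rewrite vadd_len; [apply Hp; auto|]. rewrite Hp, Hq; auto. Qed.

Lemma is_poly_app n p q : is_poly n p -> is_poly n q -> is_poly n (p ++ q).
Proof. unfold is_poly; intros; apply Forall_app; auto. Qed.

Lemma is_poly_scale n c p : is_poly n p -> is_poly n (scale c p).
Proof. unfold is_poly, scale; rewrite !Forall_forall; intros H x Hx.
  apply in_map_iff in Hx as [t [E Ht]]; subst; simpl; auto. Qed.

Lemma is_poly_pone n : is_poly n (pone n).
Proof. unfold is_poly, pone. constructor; auto. simpl. apply repeat_length. Qed.

Lemma is_poly_ppow n p m : is_poly n p -> is_poly n (ppow n p m).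
Proof. intros H; induction m; simpl. apply is_poly_pone. apply is_poly_pmul; auto. Qed.

Lemma vadd_zero_l n u : length u = n -> vadd (repeat 0%nat n) u = u.
Proof. revert u; induction n; destruct u; simpl; intros; auto; try discriminate.
  rewrite IHn; auto. Qed.

Lemma pone_l n q : is_poly n q -> eqv (pmul (pone n) q) q.
Proof. intros Hq w. rewrite coef_pmul, coef_sumL. unfold pone. rewrite sumL_cons. simpl.
  rewrite Rplus_0_r. apply sumL_ext; intros s Hs. rewrite vadd_zero_l. lra.
  unfold is_poly in Hq; rewrite Forall_forall in Hq; auto. Qed.

Lemma pone_r n q : is_poly n q -> eqv (pmul q (pone n)) q.
Proof. intros Hq w. rewrite pmul_comm, pone_l; auto. Qed.

Lemma isF_pone n : isF n 0 (pone n).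
Proof. intros w H. apply coef_nz_in in H as [t [[E|[]] E2]]. subst. simpl.
  rewrite repeat_length; split; auto. clear. induction n; simpl; auto. Qed.

Lemma isF_ppow n d p m : isF n d p -> isF n (m * d) (ppow n p m).
Proof. intros H; induction m; simpl. apply isF_pone. apply isF_pmul; auto. Qed.

Lemma ppow_add n p a b : is_poly n p -> eqv (ppow n p (a + b)) (pmul (ppow n p a) (ppow n p b)).
Proof. intros Hp; induction a; intros w.
  - change (ppow n p (0 + b)) with (ppow n p b). change (ppow n p 0) with (pone n).
    rewrite pone_l; auto. apply is_poly_ppow; auto.
  - change (ppow n p (S a + b)) with (pmul p (ppow n p (a + b))).
    change (ppow n p (S a)) with (pmul p (ppow n p a)). rewrite (pmul_eqv_r _ _ _ IHa), pmul_assoc; auto. Qed.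

Lemma ppow_eqv n p p' m : eqv p p' -> eqv (ppow n p m) (ppow n p' m).
Proof. intros E; induction m; intros w; simpl; auto.
  rewrite (pmul_eqv_l _ _ _ E), (pmul_eqv_r _ _ _ IHm); auto. Qed.

Lemma ppow_mul n p K m : is_poly n p -> eqv (ppow n p (K * m)) (ppow n (ppow n p K) m).
Proof. intros Hp; induction m; intros w.
  - rewrite Nat.mul_0_r; auto.
  - replace (K * S m)%nat with (K + K * m)%nat by lia. rewrite ppow_add; auto. simpl.
    change (ppow n (ppow n p K) (S m)) with (pmul (ppow n p K) (ppow n (ppow n p K) m)).
    rewrite (pmul_eqv_r _ _ _ IHm); auto. Qed.

Lemma coef_nil w : coef [] w = 0. Proof. reflexivity. Qed.

Lemma ple_pone n : ple [] (pone n).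
Proof. intros w; simpl. destruct list_eq_dec; lra. Qed.

Lemma ppow_nonneg n p m : ple [] p -> ple [] (ppow n p m).
Proof. intros H; induction m; simpl. apply ple_pone. apply pmul_nonneg; auto. Qed.

Fixpoint Sn (k : nat) : mpoly :=
  match k with
  | O => []
  | S k' => (1, 1%nat :: repeat 0%nat k') :: map (fun t => (fst t, 0%nat :: snd t)) (Sn k')
  end.

Fixpoint vle (u w : mono) : bool :=
  match u, w with
  | a :: u', b :: w' => Nat.leb a b && vle u' w'
  | _, _ => true
  end.

Fixpoint vsub (w u : mono) : mono :=
  match w, u with
  | b :: w', a :: u' => (b - a)%nat :: vsub w' u'
  | _, _ => w
  end.

Fixpoint dot (u w : mono) : nat :=
  match u, w with
  | a :: u', b :: w' => (a * b + dot u' w')%nat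
  | _, _ => 0%nat
  end.

Lemma vadd_iff u v w : length u = length w -> length v = length w ->
  (vadd u v = w <-> (vle u w = true /\ v = vsub w u)).
Proof. revert v w; induction u; destruct v, w; simpl; intros; try discriminate; try tauto.
  rewrite Bool.andb_true_iff, Nat.leb_le. injection H; injection H0; intros.
  specialize (IHu v w H2 H1). split.
  - intros E; injection E; intros E1 E2. apply IHu in E1 as [E3 E4]. subst.
    split; [split; [lia|auto]|]. f_equal; lia.
  - intros [[E1 E2] E3]. injection E3; intros; subst. f_equal. lia. apply IHu; auto. Qed.

Lemma vsub_len w u : length (vsub w u) = length w.
Proof. revert u; induction w; destruct u; simpl; auto. Qed.

Lemma shift_lemma p q w : is_poly (length w) p -> is_poly (length w) q ->
  coef (pmul p q) w = sumL p (fun t => fst t * (if vle (snd t) w then coef q (vsub w (snd t)) else 0)).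
Proof. unfold is_poly; rewrite !Forall_forall; intros Hp Hq. rewrite coef_pmul.
  apply sumL_ext; intros t Ht. destruct (vle (snd t) w) eqn:Ev.
  - rewrite coef_sumL, <- sumL_scal. apply sumL_ext; intros s Hs.
    unfold ind. destruct (list_eq_dec Nat.eq_dec (vadd (snd t) (snd s)) w) as [E|E];
    destruct (list_eq_dec Nat.eq_dec (snd s) (vsub w (snd t))) as [E'|E']; try lra.
    + apply vadd_iff in E as [_ E]; auto; contradiction.
    + exfalso; apply E, vadd_iff; auto.
  - rewrite Rmult_0_r, <- (sumL_zero q). apply sumL_ext; intros s Hs. unfold ind.
    destruct (list_eq_dec Nat.eq_dec (vadd (snd t) (snd s)) w) as [E|E]; try lra.
    apply vadd_iff in E as [E _]; auto; congruence. Qed.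

Lemma Sn_len k : is_poly k (Sn k).
Proof. unfold is_poly; rewrite Forall_forall. induction k; simpl; intros x Hx; [destruct Hx|].
  destruct Hx as [E|Hx]. subst; simpl; rewrite repeat_length; auto.
  apply in_map_iff in Hx as [t [E Ht]]; subst; simpl; auto. Qed.

Fixpoint ffn (x k : nat) {struct k} : nat :=
  match k with
  | O => 1%nat
  | S k' => match x with O => 0%nat | S x' => (x * ffn x' k')%nat end
  end.

Fixpoint ffv (b a : mono) : nat :=
  match b, a with
  | x :: b', k :: a' => (ffn x k * ffv b' a')%nat
  | _, _ => 1%nat
  end.

Definition fp (b : mono) : nat := fold_right (fun a acc => (fact a * acc)%nat) 1%nat b.

Lemma ffn_zero x k : (x < k)%nat -> ffn x k = 0%nat.
Proof. revert k; induction x; destruct k; simpl; intros; try lia. rewrite IHx; lia. Qed.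

Lemma ffn_nz x k : ffn x k <> 0%nat -> (k <= x)%nat.
Proof. intros H. destruct (le_lt_dec k x); auto. rewrite ffn_zero in H; lia. Qed.

Lemma ffn_diag x : ffn x x = fact x.
Proof. induction x; simpl; auto. Qed.

Lemma ffv_deg_le b a : length b = length a -> ffv b a <> 0%nat -> (deg a <= deg b)%nat.
Proof. revert a; induction b as [|x b IHb]; destruct a as [|y a]; simpl; intros; try lia.
  assert (ffn x y <> 0%nat) by (intro E; rewrite E in H0; lia).
  assert (ffv b a <> 0%nat) by (intro E; rewrite E in H0; lia).
  apply ffn_nz in H1. specialize (IHb a ltac:(lia) H2). lia. Qed.

Lemma ffv_eq b a : length b = length a -> ffv b a <> 0%nat -> deg a = deg b -> a = b.
Proof. revert a; induction b as [|x b IHb]; destruct a as [|y a]; simpl; intros; try lia; auto; try discriminate.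
  assert (ffn x y <> 0%nat) by (intro E; rewrite E in H0; lia).
  assert (ffv b a <> 0%nat) by (intro E; rewrite E in H0; lia).
  apply ffn_nz in H2. pose proof (ffv_deg_le b a ltac:(lia) H3).
  f_equal; [lia|]. apply IHb; auto; lia. Qed.

Lemma ffv_diag b : ffv b b = fp b.
Proof. induction b; simpl; auto. rewrite ffn_diag, IHb; auto. Qed.

Lemma ffn_id b x : (if Nat.leb 1 b then INR b * INR (ffn (b - 1) x) else 0) = INR (ffn b x) * (INR b - INR x).
Proof. revert b; induction x; intros b.
  - destruct b. simpl; lra. replace (Nat.leb 1 (S b)) with true by reflexivity.
    change (ffn (S b - 1) 0) with 1%nat. change (ffn (S b) 0) with 1%nat. change (INR 1) with 1. change (INR 0) with 0. lra.
  - destruct b. simpl. lra.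
    replace (Nat.leb 1 (S b)) with true by reflexivity. replace (S b - 1)%nat with b by lia.
    cbn [ffn]. destruct b.
    + simpl. destruct x; simpl; lra.
    + specialize (IHx (S b)). replace (Nat.leb 1 (S b)) with true in IHx by reflexivity.
      replace (S b - 1)%nat with b in IHx by lia.
      rewrite !mult_INR. rewrite (S_INR (S b)), (S_INR x).
      rewrite IHx; ring. Qed.

Definition Yg (g : mpoly) (b : mono) : R := sumL (supp g) (fun u => coef g u * INR (ffv b u)).

Lemma vle_refl_zero k b : length b = k -> vsub b (repeat 0%nat k) = b.
Proof. revert b; induction k; destruct b; simpl; intros; auto; try discriminate.
  rewrite IHk; auto. f_equal; lia. Qed.

Lemma vle_zero k b : vle (repeat 0%nat k) b = true.
Proof. revert b; induction k; destruct b; simpl; auto. Qed.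

Lemma deg_INR_cons a b : INR (deg (a :: b)) = INR a + INR (deg b).
Proof. simpl. rewrite plus_INR; auto. Qed.

Lemma dot_zero k b : dot (repeat 0%nat k) b = 0%nat.
Proof. revert b; induction k; destruct b; simpl; auto. Qed.

Lemma L2 k b a : length b = k -> length a = k ->
  sumL (Sn k) (fun t => if vle (snd t) b then INR (dot (snd t) b) * INR (ffv (vsub b (snd t)) a) else 0)
  = INR (ffv b a) * (INR (deg b) - INR (deg a)).
Proof. revert b a; induction k; intros b a Hb Ha.
  - destruct b, a; simpl in *; try lia. unfold sumL; simpl. lra.
  - destruct b as [|x b]; try discriminate. destruct a as [|y a]; try discriminate.
    simpl in Hb, Ha. injection Hb; injection Ha; intros Ha' Hb'.
    cbn [Sn]. rewrite sumL_cons, sumL_map. cbn [snd fst vle vsub dot ffv].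
    rewrite (sumL_ext _ _ (fun t => INR (ffn x y) * (if vle (snd t) b then INR (dot (snd t) b) * INR (ffv (vsub b (snd t)) a) else 0))).
    2:{ intros t _. cbn [snd fst vle vsub dot ffv]. change (Nat.leb 0 x) with true.
        cbn [andb]. rewrite Nat.sub_0_r. destruct t as [c u]; cbn [snd]. destruct (vle u b); [|ring]. rewrite !mult_INR, Nat.mul_0_l, Nat.add_0_l. ring. }
    rewrite sumL_scal, IHk by auto. rewrite vle_zero, vle_refl_zero by auto.
    rewrite Bool.andb_true_r. rewrite !deg_INR_cons.
    assert (HH := ffn_id x y).
    destruct (Nat.leb 1 x).
    + rewrite dot_zero, Nat.add_0_r, Nat.mul_1_l, !mult_INR.
      transitivity (INR (ffv b a) * (INR x * INR (ffn (x - 1) y)) +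
        INR (ffn x y) * (INR (ffv b a) * (INR (deg b) - INR (deg a)))); [ring|].
      rewrite HH; ring.
    + rewrite mult_INR.
      transitivity (INR (ffv b a) * 0 +
        INR (ffn x y) * (INR (ffv b a) * (INR (deg b) - INR (deg a)))); [ring|].
      rewrite HH; ring. Qed.

Lemma fp_cons x b : fp (x :: b) = (fact x * fp b)%nat.
Proof. reflexivity. Qed.

Lemma Sn_unit k t : In t (Sn k) -> fst t = 1 /\ forall b, length b = k -> vle (snd t) b = true ->
  fp b = (dot (snd t) b * fp (vsub b (snd t)))%nat /\ (deg (vsub b (snd t)) + 1 = deg b)%nat.
Proof. revert t; induction k; intros t Ht; [destruct Ht|]. cbn [Sn] in Ht. destruct Ht as [E|Ht].
  - subst. split; auto. intros b Hb Hv. destruct b as [|x b]; [discriminate|].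
    destruct x as [|x]; [discriminate|]. simpl in Hb.
    cbn [snd vsub]. rewrite vle_refl_zero by lia. cbn [dot]. rewrite dot_zero.
    cbn [fp fold_right deg]. replace (S x - 1)%nat with x by lia. fold (fp b).
    split; [simpl; lia|]. simpl. lia.
  - apply in_map_iff in Ht as [s [E Hs]]. subst. destruct (IHk s Hs) as [H1 H2]. split; auto.
    intros b Hb Hv. destruct b as [|x b]; [discriminate|]. simpl in Hb, Hv.
    destruct (H2 b ltac:(lia) Hv) as [E1 E2]. cbn [snd vsub dot].
    rewrite Nat.sub_0_r. split.
    + destruct s as [c u]; cbn [snd] in *. rewrite !fp_cons, E1. rewrite Nat.mul_0_l, Nat.add_0_l. ring.
    + destruct s as [c u]; cbn [snd deg fold_right] in *. fold (deg (vsub b u)). fold (deg b). lia. Qed.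

Lemma sumL_ind_notin (U : list mono) x G : ~ In x U -> sumL U (fun u => ind x u * G u) = 0.
Proof. intros H. rewrite <- (sumL_zero U). apply sumL_ext; intros u Hu. unfold ind.
  destruct (list_eq_dec Nat.eq_dec x u); [subst; contradiction|lra]. Qed.

Lemma coef_nz_supp p w : coef p w <> 0 -> In w (supp p).
Proof. intros H; apply coef_nz_in in H as [t [Ht E]]; subst; apply supp_in; auto. Qed.

Lemma polya_formula n e g : is_poly n g -> isF n e g -> forall N b, length b = n -> deg b = (N + e)%nat ->
  coef (pmul (ppow n (Sn n) N) g) b * INR (fp b) = INR (fact N) * Yg g b.
Proof. intros Hg Fg N. induction N; intros b Hb Hd.
  - change (ppow n (Sn n) 0) with (pone n). rewrite pone_l by auto. unfold Yg.
    rewrite (sumL_ext _ _ (fun u => ind b u * (coef g u * INR (fp b)))).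
    + destruct (in_dec (list_eq_dec Nat.eq_dec) b (supp g)).
      * rewrite sumL_ind_single; auto using supp_nodup. simpl; lra.
      * rewrite sumL_ind_notin; auto. destruct (Req_dec (coef g b) 0) as [E|E].
        rewrite E; simpl; lra. apply coef_nz_supp in E; contradiction.
    + intros u Hu. destruct (Req_dec (coef g u) 0) as [E|E]. rewrite E; lra.
      destruct (Fg u E) as [Lu Du]. unfold ind. destruct (list_eq_dec Nat.eq_dec b u).
      * subst. rewrite ffv_diag; lra.
      * destruct (Nat.eq_dec (ffv b u) 0) as [Z|Z]. rewrite Z; simpl; lra.
        exfalso. apply n0. symmetry. apply ffv_eq; auto. congruence. simpl in Hd; lia.
  - change (ppow n (Sn n) (S N)) with (pmul (Sn n) (ppow n (Sn n) N)).
    rewrite pmul_assoc. rewrite shift_lemma; rewrite ?Hb.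
    2: apply Sn_len. 2: apply is_poly_pmul; auto; apply is_poly_ppow, Sn_len.
    rewrite Rmult_comm, <- sumL_scal.
    rewrite (sumL_ext _ _ (fun t => if vle (snd t) b then INR (dot (snd t) b) *
        (INR (fact N) * Yg g (vsub b (snd t))) else 0)).
    2:{ intros t Ht. destruct (Sn_unit _ _ Ht) as [H1 H2]. rewrite H1.
        destruct (vle (snd t) b) eqn:Ev; [|lra]. destruct (H2 b Hb Ev) as [E1 E2].
        rewrite <- IHN. rewrite E1, mult_INR. ring. rewrite vsub_len; auto. lia. }
    unfold Yg.
    rewrite (sumL_ext _ _ (fun t => INR (fact N) * sumL (supp g) (fun u => coef g u *
        (if vle (snd t) b then INR (dot (snd t) b) * INR (ffv (vsub b (snd t)) u) else 0)))).
    2:{ intros t _. destruct (vle (snd t) b); rewrite <- !sumL_scal.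
        apply sumL_ext; intros; ring. symmetry. rewrite (sumL_ext _ _ (fun _ => 0)); [apply sumL_zero| intros; ring]. }
    rewrite sumL_scal, sumL_swap.
    rewrite (sumL_ext _ _ (fun u => INR (S N) * (coef g u * INR (ffv b u)))).
    2:{ intros u _. rewrite sumL_scal. destruct (Req_dec (coef g u) 0) as [E|E].
        rewrite E; ring.
        destruct (Fg u E) as [Lu Du]. rewrite L2; auto. rewrite Hd, Du.
        rewrite plus_INR. ring. }
    rewrite sumL_scal. rewrite fact_simpl, mult_INR. ring. Qed.

Lemma deg_repeat0 k : deg (repeat 0%nat k) = 0%nat.
Proof. induction k; simpl; auto. Qed.

Lemma Sn_deg k t : In t (Sn k) -> deg (snd t) = 1%nat /\ fst t = 1.
Proof. revert t; induction k; intros t Ht; [destruct Ht|]. destruct Ht as [E|Ht].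
  - subst; simpl. rewrite deg_repeat0; auto.
  - apply in_map_iff in Ht as [s [E Hs]]; subst. simpl. apply IHk; auto. Qed.

Lemma isF_Sn n : isF n 1 (Sn n).
Proof. intros w H. apply coef_nz_in in H as [t [Ht E]]. subst. split.
  pose proof (Sn_len n) as L; unfold is_poly in L; rewrite Forall_forall in L; auto.
  apply (Sn_deg _ _ Ht). Qed.

Lemma Sn_nonneg n : ple [] (Sn n).
Proof. intros w. change (coef [] w) with 0. rewrite coef_sumL. apply sumL_nonneg. intros t Ht.
  destruct (Sn_deg _ _ Ht) as [_ E]. rewrite E. unfold ind; destruct list_eq_dec; lra. Qed.

Definition SP n k := ppow n (Sn n) k.

Lemma SP_isF n k : isF n k (SP n k).
Proof. unfold SP. replace k with (k * 1)%nat at 1 by lia. apply isF_ppow, isF_Sn. Qed.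

Lemma SP_nonneg n k : ple [] (SP n k).
Proof. apply ppow_nonneg, Sn_nonneg. Qed.

Lemma SP_poly n k : is_poly n (SP n k).
Proof. apply is_poly_ppow, Sn_len. Qed.

Lemma SP_formula n k b : length b = n -> deg b = k -> coef (SP n k) b * INR (fp b) = INR (fact k).
Proof. intros Hb Hd. pose proof (polya_formula n 0 (pone n) (is_poly_pone n) (isF_pone n) k b Hb
   ltac:(lia)) as H. rewrite pone_r in H by apply SP_poly. unfold SP; rewrite H.
  unfold Yg, supp, pone. simpl. unfold sumL; simpl. destruct list_eq_dec; [|congruence].
  replace (ffv b (repeat 0%nat n)) with 1%nat. simpl; ring.
  clear -Hb. subst. induction b; simpl; auto. lia. Qed.

Lemma fact_mul_le a b : (fact a * fact b <= fact (a + b))%nat.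
Proof. induction a; simpl; [lia|]. nia. Qed.

Lemma fp_le b : (fp b <= fact (deg b))%nat.
Proof. induction b; simpl; auto. fold (fp b). fold (deg b).
  pose proof (fact_mul_le a (deg b)). nia. Qed.

Lemma fp_pos b : (1 <= fp b)%nat.
Proof. induction b; simpl; auto. fold (fp b). pose proof (lt_O_fact a). nia. Qed.

Lemma SP_ge1 n k b : length b = n -> deg b = k -> 1 <= coef (SP n k) b.
Proof. intros Hb Hd. pose proof (SP_formula n k b Hb Hd) as H.
  pose proof (fp_le b) as H1. pose proof (fp_pos b) as H2. rewrite Hd in H1.
  apply le_INR in H1. apply le_INR in H2. simpl in H2.
  assert (0 <= coef (SP n k) b) by (apply SP_nonneg).
  destruct (Rle_lt_dec 1 (coef (SP n k) b)); auto. nra. Qed.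

Lemma SP_le n k b : coef (SP n k) b <= INR (fact k).
Proof. destruct (Req_dec (coef (SP n k) b) 0) as [E|E].
  rewrite E; apply pos_INR. destruct (SP_isF n k b E) as [Hb Hd].
  pose proof (SP_formula n k b Hb Hd) as H. pose proof (fp_pos b) as H2.
  apply le_INR in H2. simpl in H2. assert (0 <= coef (SP n k) b) by (apply SP_nonneg). nra. Qed.

Lemma SP_add n a b : eqv (SP n (a + b)) (pmul (SP n a) (SP n b)).
Proof. apply ppow_add, Sn_len. Qed.

Definition incube (x : list R) (k : nat) := length x = k /\ Forall (fun t => 0 <= t <= 1) x.

Fixpoint dist1 (x y : list R) : R :=
  match x, y with
  | a :: x', b :: y' => Rabs (a - b) + dist1 x' y'
  | _, _ => 0
  end.

Lemma dist1_refl x : dist1 x x = 0.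
Proof. induction x; simpl; auto. rewrite IHx, Rminus_diag, Rabs_R0; lra. Qed.

Definition clamp (a : R) := Rmax 0 (Rmin 1 a).

Lemma clamp_in a : 0 <= clamp a <= 1.
Proof. unfold clamp, Rmax, Rmin. repeat destruct Rle_dec; lra. Qed.

Lemma clamp_id a : 0 <= a <= 1 -> clamp a = a.
Proof. unfold clamp, Rmax, Rmin. intros. repeat destruct Rle_dec; lra. Qed.

Lemma clamp_lip a b : Rabs (clamp a - clamp b) <= Rabs (a - b).
Proof. unfold clamp, Rmax, Rmin. unfold Rabs. repeat destruct Rle_dec; repeat destruct Rcase_abs; lra. Qed.

Lemma incube_cons a y k : incube (a :: y) (S k) <-> (0 <= a <= 1 /\ incube y k).
Proof. unfold incube; simpl. split.
  - intros [H1 H2]. inversion H2; subst. split; auto.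
  - intros [H1 [H2 H3]]. split; auto. Qed.

Lemma cube_min : forall k (F : list R -> R) L, 0 <= L ->
  (forall x y, incube x k -> incube y k -> Rabs (F x - F y) <= L * dist1 x y) ->
  (forall x, incube x k -> 0 < F x) ->
  exists m, 0 < m /\ forall x, incube x k -> m <= F x.
Proof. induction k; intros F L HL Hlip Hpos.
  - exists (F []). split. apply Hpos. split; auto.
    intros x [Hx _]. destruct x; [lra|discriminate].
  - set (E := fun a z => exists y, incube y k /\ z = - F (clamp a :: y)).
    assert (y0 : incube (repeat 0 k) k).
    { split. apply repeat_length. apply Forall_forall. intros t Ht. apply repeat_spec in Ht. lra. }
    assert (HG : forall a, {z : R | is_lub (E a) z}).
    { intros a. apply completeness.
      - exists 0. intros z [y [Hy Hz]]. subst. assert (0 < F (clamp a :: y)); [|lra].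
        apply Hpos, incube_cons. split; auto. apply clamp_in.
      - exists (- F (clamp a :: repeat 0 k)). exists (repeat 0 k). split; auto. }
    set (G := fun a => - proj1_sig (HG a)).
    assert (G1 : forall a y, incube y k -> G a <= F (clamp a :: y)).
    { intros a y Hy. unfold G. destruct (HG a) as [z [Hz1 Hz2]]. simpl.
      assert (- F (clamp a :: y) <= z); [|lra]. apply Hz1. exists y; auto. }
    assert (G2 : forall a c, (forall y, incube y k -> c <= F (clamp a :: y)) -> c <= G a).
    { intros a c Hc. unfold G. destruct (HG a) as [z [Hz1 Hz2]]. simpl.
      assert (z <= - c); [|lra]. apply Hz2. intros w [y [Hy Hw]]. subst.
      specialize (Hc y Hy). lra. }
    assert (G3 : forall a b, G a <= G b + L * Rabs (a - b)).
    { intros a b. assert (G a - L * Rabs (a - b) <= G b); [|lra]. apply G2. intros y Hy.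
      specialize (G1 a y Hy).
      assert (Hc : incube (clamp a :: y) (S k)) by (apply incube_cons; split; auto; apply clamp_in).
      assert (Hc' : incube (clamp b :: y) (S k)) by (apply incube_cons; split; auto; apply clamp_in).
      specialize (Hlip _ _ Hc Hc'). simpl in Hlip. rewrite dist1_refl, Rplus_0_r in Hlip.
      pose proof (clamp_lip a b). pose proof (Rle_abs (F (clamp a :: y) - F (clamp b :: y))).
      assert (L * Rabs (clamp a - clamp b) <= L * Rabs (a - b)) by (apply Rmult_le_compat_l; auto).
      lra. }
    assert (G4 : forall a, 0 < G a).
    { intros a. destruct (IHk (fun y => F (clamp a :: y)) L HL) as [m [Hm Hm']].
      - intros x y Hx Hy.
        assert (Hc : incube (clamp a :: x) (S k)) by (apply incube_cons; split; auto; apply clamp_in).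
        assert (Hc' : incube (clamp a :: y) (S k)) by (apply incube_cons; split; auto; apply clamp_in).
        specialize (Hlip _ _ Hc Hc'). simpl in Hlip. rewrite Rminus_diag, Rabs_R0, Rplus_0_l in Hlip. auto.
      - intros x Hx. apply Hpos, incube_cons. split; auto. apply clamp_in.
      - assert (m <= G a); [|lra]. apply G2. auto. }
    assert (Gc : forall c, continuity_pt G c).
    { intros c eps Heps. exists (eps / (L + 1)). split.
      apply Rdiv_lt_0_compat; lra.
      intros x [_ Hx]. simpl in *. unfold R_dist in *.
      pose proof (G3 x c). pose proof (G3 c x). rewrite Rabs_minus_sym in H0.
      assert (L * Rabs (x - c) <= L * (eps / (L + 1))) by (apply Rmult_le_compat_l; lra).
      assert (L * (eps / (L + 1)) < eps).
      { apply (Rmult_lt_reg_r (L + 1)); [lra|]. unfold Rdiv.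
        rewrite Rmult_assoc, Rmult_assoc, Rinv_l, Rmult_1_r by lra. nra. }
      unfold Rabs at 1; destruct Rcase_abs; lra. }
    destruct (continuity_ab_min G 0 1 ltac:(lra) (fun c _ => Gc c)) as [mx [Hmx _]].
    exists (G mx). split; auto. intros x Hx. destruct x as [|a y]. destruct Hx; discriminate.
    apply incube_cons in Hx as [Ha Hy]. specialize (Hmx a Ha). specialize (G1 a y Hy).
    rewrite clamp_id in G1 by auto. lra. Qed.

Fixpoint pw (b a : mono) : nat :=
  match b, a with
  | x :: b', k :: a' => (x ^ k * pw b' a')%nat
  | _, _ => 1%nat
  end.

Lemma ffn_succ x k : ffn x (S k) = (ffn x k * (x - k))%nat.
Proof. revert x; induction k; intros x.
  - destruct x; simpl; lia.
  - destruct x. simpl; lia. change (ffn (S x) (S (S k))) with (S x * ffn x (S k))%nat.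
    rewrite IHk. change (ffn (S x) (S k)) with (S x * ffn x k)%nat.
    replace (S x - S k)%nat with (x - k)%nat by lia. lia. Qed.

Lemma ffn_le_pow x k : (ffn x k <= x ^ k)%nat.
Proof. induction k; [simpl; auto|]. rewrite ffn_succ. cbn [Nat.pow].
  assert (ffn x k * (x - k) <= ffn x k * x)%nat by (apply Nat.mul_le_mono_l; lia). nia. Qed.

Lemma pow_ffn x k : (x ^ k <= ffn x k + k * k * x ^ (k - 1))%nat.
Proof. induction k; [simpl; lia|]. rewrite ffn_succ. cbn [Nat.pow]. replace (S k - 1)%nat with k by lia.
  pose proof (ffn_le_pow x k).
  assert (ffn x k * x <= ffn x k * (x - k) + k * x ^ k)%nat.
  { destruct (le_lt_dec k x).
    - transitivity (ffn x k * (x - k + k))%nat. rewrite Nat.sub_add by lia; lia.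
      rewrite Nat.mul_add_distr_l. nia.
    - rewrite ffn_zero by lia. lia. }
  destruct k.
  - simpl in *. lia.
  - replace (S k - 1)%nat with k in IHk by lia.
    assert (x * x ^ k = x ^ S k)%nat by reflexivity. nia. Qed.

Lemma ffv_le_pw b a : (ffv b a <= pw b a)%nat.
Proof. revert a; induction b as [|x b IH]; destruct a as [|k a]; simpl; auto.
  apply Nat.mul_le_mono; auto. apply ffn_le_pow. Qed.

Lemma pw_le b a : length b = length a -> (pw b a <= deg b ^ deg a)%nat.
Proof. revert a; induction b as [|x b IHb]; destruct a as [|k a]; simpl; intros; auto; try discriminate.
  fold (deg b); fold (deg a). rewrite Nat.pow_add_r. apply Nat.mul_le_mono.
  apply Nat.pow_le_mono_l; lia. eapply Nat.le_trans. apply IHb; lia.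
  apply Nat.pow_le_mono_l; lia. Qed.

Lemma pw_ffv b a : length b = length a ->
  (pw b a <= ffv b a + deg a * deg a * deg b ^ (deg a - 1))%nat.
Proof. revert a; induction b as [|x b IH]; destruct a as [|k a]; simpl; intros Hl; try lia.
  fold (deg b); fold (deg a). specialize (IH a ltac:(lia)).
  pose proof (pw_le b a ltac:(lia)) as Hpw. pose proof (ffv_le_pw b a) as Hq.
  pose proof (pow_ffn x k) as Hx.
  set (T := (x + deg b)%nat). set (e' := deg a) in *. set (P := pw b a) in *. set (Q := ffv b a) in *.
  assert (A1 : (x ^ k * P <= x ^ k * Q + e' * e' * (x ^ k * deg b ^ (e' - 1)))%nat) by nia.
  assert (A2 : (x ^ k * Q <= ffn x k * Q + k * k * (x ^ (k - 1) * Q))%nat) by nia.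
  assert (B1 : (e' * e' * (x ^ k * deg b ^ (e' - 1)) <= e' * e' * T ^ (k + e' - 1))%nat).
  { destruct e' as [|e'']; [lia|]. apply Nat.mul_le_mono_l.
    replace (k + S e'' - 1)%nat with (k + (S e'' - 1))%nat by lia. rewrite Nat.pow_add_r.
    apply Nat.mul_le_mono; apply Nat.pow_le_mono_l; unfold T; lia. }
  assert (B2 : (k * k * (x ^ (k - 1) * Q) <= k * k * T ^ (k + e' - 1))%nat).
  { destruct k as [|k']; [lia|]. apply Nat.mul_le_mono_l.
    replace (S k' + e' - 1)%nat with ((S k' - 1) + e')%nat by lia. rewrite Nat.pow_add_r.
    apply Nat.mul_le_mono. apply Nat.pow_le_mono_l; unfold T; lia.
    eapply Nat.le_trans; [apply Hq|]. eapply Nat.le_trans; [apply Hpw|]. apply Nat.pow_le_mono_l; unfold T; lia. }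
  assert (C : (e' * e' + k * k <= (k + e') * (k + e'))%nat) by nia.
  assert (C2 : ((e' * e' + k * k) * T ^ (k + e' - 1) <= (k + e') * (k + e') * T ^ (k + e' - 1))%nat)
    by (apply Nat.mul_le_mono_r; auto).
  nia. Qed.

Lemma peval_sumL p x : peval p x = sumL p (fun t => fst t * meval x (snd t)).
Proof. induction p; simpl; auto. unfold peval in *; simpl. rewrite IHp; auto. Qed.

Lemma meval_pw b a : meval (map INR b) a = INR (pw b a).
Proof. revert a; induction b as [|x b IHb]; destruct a as [|k a]; simpl; auto. rewrite mult_INR, pow_INR, IHb; auto. Qed.

Definition M1 g := sumL (supp g) (fun u => Rabs (coef g u)).

Lemma Y_close n e g b : isF n e g -> length b = n ->
  peval g (map INR b) - M1 g * (INR (e * e) * INR (deg b) ^ (e - 1)) <= Yg g b.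
Proof. intros Fg Hb. rewrite peval_sumL.
  rewrite (support g (supp g) (fun u => meval (map INR b) u)); auto using supp_nodup, supp_in.
  unfold Yg, M1. set (K := INR (e * e) * INR (deg b) ^ (e - 1)).
  assert (H : sumL (supp g) (fun u => coef g u * meval (map INR b) u + (- K) * Rabs (coef g u))
      <= sumL (supp g) (fun u => coef g u * INR (ffv b u))).
  { apply sumL_le; intros u _. rewrite meval_pw.
    destruct (Req_dec (coef g u) 0) as [E|E]. rewrite E, Rabs_R0; lra.
    destruct (Fg u E) as [Lu Du].
    pose proof (pw_ffv b u ltac:(lia)) as H1. pose proof (ffv_le_pw b u) as H2.
    rewrite Du in H1. apply le_INR in H1. apply le_INR in H2.
    rewrite plus_INR, !mult_INR, pow_INR in H1. unfold K. rewrite mult_INR.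
    assert (0 <= INR (pw b u) - INR (ffv b u)) by lra.
    assert (coef g u * INR (pw b u) - coef g u * INR (ffv b u) <= Rabs (coef g u) * (INR (pw b u) - INR (ffv b u))).
    { destruct (Rle_dec 0 (coef g u)). rewrite Rabs_right by lra. lra.
      rewrite Rabs_left by lra. nra. }
    assert (Rabs (coef g u) * (INR (pw b u) - INR (ffv b u)) <= Rabs (coef g u) * (INR e * INR e * INR (deg b) ^ (e - 1))).
    { apply Rmult_le_compat_l. apply Rabs_pos. lra. }
    lra. }
  rewrite sumL_plus, sumL_scal in H. lra. Qed.

Lemma pow_lip a c B k : 0 <= a <= B -> 0 <= c <= B -> 1 <= B ->
  Rabs (a ^ k - c ^ k) <= INR k * B ^ k * Rabs (a - c).
Proof. intros Ha Hc HB. induction k.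
  - simpl. rewrite Rminus_diag, Rabs_R0. lra.
  - replace (a ^ S k - c ^ S k) with (a * (a ^ k - c ^ k) + c ^ k * (a - c)) by (simpl; ring).
    eapply Rle_trans; [apply Rabs_triang|]. rewrite !Rabs_mult.
    assert (Hck : 0 <= c ^ k <= B ^ k) by (split; [apply pow_le; lra|apply pow_incr; lra]).
    assert (HBk : B ^ k <= B ^ S k) by (simpl; nra).
    rewrite (Rabs_right a) by lra. rewrite (Rabs_right (c ^ k)) by lra.
    pose proof (Rabs_pos (a - c)). pose proof (Rabs_pos (a ^ k - c ^ k)). pose proof (pos_INR k).
    assert (a * Rabs (a ^ k - c ^ k) <= B * (INR k * B ^ k * Rabs (a - c))).
    { apply Rmult_le_compat; lra. }
    rewrite S_INR. simpl (B ^ S k).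
    assert (c ^ k * Rabs (a - c) <= B ^ k * Rabs (a - c)) by (apply Rmult_le_compat_r; lra).
    assert (B ^ k * Rabs (a - c) <= B * B ^ k * Rabs (a - c)) by (apply Rmult_le_compat_r; [lra| simpl in HBk; lra]).
    nra. Qed.

Definition inbox (B : R) (z : list R) := Forall (fun t => 0 <= t <= B) z.

Lemma meval_bound B z u : 1 <= B -> inbox B z -> 0 <= meval z u <= B ^ deg u.
Proof. intros HB. revert u; induction z as [|a z IH]; intros u Hz; destruct u as [|k u]; simpl.
  - lra. - split; [lra|]. apply pow_R1_Rle; lra. - lra.
  - inversion Hz; subst. specialize (IH u H2). fold (deg u). rewrite pow_add.
    assert (0 <= a ^ k <= B ^ k) by (split; [apply pow_le; lra|apply pow_incr; lra]).
    split; [apply Rmult_le_pos; lra|]. apply Rmult_le_compat; lra. Qed.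

Lemma meval_lip B z z' u : 1 <= B -> inbox B z -> inbox B z' -> length z = length z' ->
  Rabs (meval z u - meval z' u) <= INR (deg u) * B ^ deg u * dist1 z z'.
Proof. intros HB. revert z' u; induction z as [|a z IH]; intros z' u Hz Hz' Hl;
  destruct z' as [|a' z']; try discriminate; destruct u as [|k u]; simpl.
  - rewrite Rminus_diag, Rabs_R0; lra. - rewrite Rminus_diag, Rabs_R0. simpl. lra.
  - rewrite Rminus_diag, Rabs_R0. pose proof (Rabs_pos (a - a')).
    assert (0 <= dist1 z z'). { clear. revert z'; induction z; destruct z'; simpl; try lra.
      pose proof (Rabs_pos (a - r)). specialize (IHz z'). lra. }
    simpl; lra.
  - inversion Hz; inversion Hz'; subst. fold (deg u). simpl in Hl.
    specialize (IH z' u H2 H6 ltac:(lia)).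
    pose proof (meval_bound B z u HB H2) as [X1 X2]. pose proof (meval_bound B z' u HB H6) as [Y1 Y2].
    pose proof (pow_lip a a' B k H1 H5 HB) as P.
    replace (a ^ k * meval z u - a' ^ k * meval z' u) with
      ((a ^ k - a' ^ k) * meval z u + a' ^ k * (meval z u - meval z' u)) by ring.
    eapply Rle_trans; [apply Rabs_triang|]. rewrite !Rabs_mult.
    assert (Ha' : 0 <= a' ^ k <= B ^ k) by (split; [apply pow_le; lra|apply pow_incr; lra]).
    rewrite (Rabs_right (meval z u)) by lra. rewrite (Rabs_right (a' ^ k)) by lra.
    assert (D0 : 0 <= dist1 z z'). { clear. revert z'; induction z; destruct z'; simpl; try lra.
      pose proof (Rabs_pos (a - r)). specialize (IHz z'). lra. }
    pose proof (Rabs_pos (a - a')). pose proof (Rabs_pos (a ^ k - a' ^ k)).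
    pose proof (Rabs_pos (meval z u - meval z' u)).
    assert (Bk : 1 <= B ^ k) by (apply pow_R1_Rle; lra).
    assert (Bu : 1 <= B ^ deg u) by (apply pow_R1_Rle; lra).
    rewrite plus_INR, pow_add.
    assert (T1 : Rabs (a ^ k - a' ^ k) * meval z u <= INR k * B ^ k * Rabs (a - a') * B ^ deg u)
      by (apply Rmult_le_compat; lra).
    assert (T2 : a' ^ k * Rabs (meval z u - meval z' u) <= B ^ k * (INR (deg u) * B ^ deg u * dist1 z z'))
      by (apply Rmult_le_compat; lra).
    pose proof (pos_INR k). pose proof (pos_INR (deg u)).
    assert (0 <= INR k * B ^ k * B ^ deg u * dist1 z z') by (repeat apply Rmult_le_pos; lra).
    assert (0 <= INR (deg u) * B ^ k * B ^ deg u * Rabs (a - a')) by (repeat apply Rmult_le_pos; lra).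
    nra. Qed.

Definition Lg (B : R) (g : mpoly) := sumL g (fun t => Rabs (fst t) * (INR (deg (snd t)) * B ^ deg (snd t))).

Lemma peval_lip B g z z' : 1 <= B -> inbox B z -> inbox B z' -> length z = length z' ->
  Rabs (peval g z - peval g z') <= Lg B g * dist1 z z'.
Proof. intros HB Hz Hz' Hl. rewrite !peval_sumL.
  replace (sumL g (fun t => fst t * meval z (snd t)) - sumL g (fun t => fst t * meval z' (snd t)))
    with (sumL g (fun t => fst t * (meval z (snd t) - meval z' (snd t)))).
  2:{ rewrite (sumL_ext _ _ (fun t => fst t * meval z (snd t) + (-1) * (fst t * meval z' (snd t)))).
      rewrite sumL_plus, sumL_scal; ring. intros; ring. }
  eapply Rle_trans; [apply sumL_abs|]. unfold Lg. rewrite Rmult_comm, <- sumL_scal.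
  apply sumL_le; intros t _. rewrite Rabs_mult.
  pose proof (meval_lip B z z' (snd t) HB Hz Hz' Hl). pose proof (Rabs_pos (fst t)).
  assert (Rabs (fst t) * Rabs (meval z (snd t) - meval z' (snd t)) <= Rabs (fst t) * (INR (deg (snd t)) * B ^ deg (snd t) * dist1 z z'))
    by (apply Rmult_le_compat_l; auto). lra. Qed.

Definition sumR (y : list R) := fold_right Rplus 0 y.
Definition sh (y : list R) := Rmax 0 (1 - sumR y).
Definition Ty (y : list R) := map (fun t => t + sh y) y.

Lemma dist1_nonneg z z' : 0 <= dist1 z z'.
Proof. revert z'; induction z; destruct z'; simpl; try lra.
  pose proof (Rabs_pos (a - r)). specialize (IHz z'). lra. Qed.

Lemma dist1_shift y y' c c' : length y = length y' ->
  dist1 (map (fun t => t + c) y) (map (fun t => t + c') y') <= dist1 y y' + INR (length y) * Rabs (c - c').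
Proof. revert y'; induction y as [|a y IH]; destruct y' as [|a' y']; cbn [map dist1 length]; intros; try discriminate.
  simpl; lra. specialize (IH y' ltac:(lia)). rewrite S_INR.
  replace (a + c - (a' + c')) with ((a - a') + (c - c')) by ring.
  pose proof (Rabs_triang (a - a') (c - c')). lra. Qed.

Lemma sumR_dist y y' : length y = length y' -> Rabs (sumR y - sumR y') <= dist1 y y'.
Proof. revert y'; induction y as [|a y IH]; destruct y' as [|a' y']; simpl; intros; try discriminate.
  rewrite Rminus_diag, Rabs_R0; lra. specialize (IH y' ltac:(lia)). unfold sumR in *; simpl.
  replace (a + fold_right Rplus 0 y - (a' + fold_right Rplus 0 y')) with
    ((a - a') + (fold_right Rplus 0 y - fold_right Rplus 0 y')) by ring.
  pose proof (Rabs_triang (a - a') (fold_right Rplus 0 y - fold_right Rplus 0 y')). lra. Qed.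

Lemma sh_lip y y' : Rabs (sh y - sh y') <= Rabs (sumR y - sumR y').
Proof. unfold sh, Rmax, Rabs. repeat destruct Rle_dec; repeat destruct Rcase_abs; lra. Qed.

Lemma sumR_shift y c : sumR (map (fun t => t + c) y) = sumR y + INR (length y) * c.
Proof. induction y; cbn [map length]; unfold sumR in *; cbn [fold_right]. simpl; lra. rewrite IHy, S_INR. ring. Qed.

Lemma sumR_nz z : sumR z <> 0 -> exists t, In t z /\ t <> 0.
Proof. induction z; simpl; unfold sumR; simpl; intros H. lra.
  destruct (Req_dec a 0). subst. destruct IHz as [t [H1 H2]]. unfold sumR; lra. exists t; auto.
  exists a; auto. Qed.

Lemma cube_sum_nonneg y k : incube y k -> 0 <= sumR y.
Proof. intros [_ H]. induction H; unfold sumR; simpl. lra. unfold sumR in IHForall. lra. Qed.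

Lemma sh_bounds y k : incube y k -> 0 <= sh y <= 1.
Proof. intros H. pose proof (cube_sum_nonneg y k H). unfold sh, Rmax. destruct Rle_dec; lra. Qed.

Lemma Ty_inbox y k : incube y k -> inbox 2 (Ty y).
Proof. intros H. pose proof (sh_bounds y k H). destruct H as [_ H]. unfold inbox, Ty.
  rewrite Forall_forall in *. intros t Ht. apply in_map_iff in Ht as [x [E Hx]]. subst.
  specialize (H x Hx). lra. Qed.

Lemma Ty_pos n y : (1 <= n)%nat -> incube y n -> in_Rplus_nonzero n (Ty y).
Proof. intros Hn H. pose proof (Ty_inbox y n H) as Hb. pose proof (sh_bounds y n H).
  pose proof (cube_sum_nonneg y n H). destruct H as [Hl _]. split; [|split].
  - unfold Ty; rewrite length_map; auto.
  - unfold inbox in Hb. rewrite Forall_forall in *. intros t Ht; specialize (Hb t Ht); lra.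
  - apply sumR_nz. unfold Ty. rewrite sumR_shift, Hl.
    assert (1 <= INR n) by (apply (le_INR 1); auto).
    unfold sh in *. unfold Rmax in *. destruct Rle_dec; nra. Qed.

Lemma Ty_lip y y' k : incube y k -> incube y' k ->
  dist1 (Ty y) (Ty y') <= (1 + INR k) * dist1 y y'.
Proof. intros [H1 _] [H2 _]. unfold Ty. eapply Rle_trans. apply dist1_shift; congruence.
  pose proof (sh_lip y y'). pose proof (sumR_dist y y' ltac:(congruence)). rewrite H1.
  pose proof (pos_INR k). pose proof (dist1_nonneg y y').
  assert (INR k * Rabs (sh y - sh y') <= INR k * dist1 y y') by (apply Rmult_le_compat_l; lra). lra. Qed.

Lemma meval_scale c y u : length u = length y -> meval (map (fun v => c * v) y) u = c ^ deg u * meval y u.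
Proof. revert u; induction y as [|a y IH]; destruct u as [|k u]; simpl; intros; try discriminate.
  ring. fold (deg u). rewrite IH by lia. rewrite pow_add, Rpow_mult_distr. ring. Qed.

Lemma peval_supp g x : peval g x = sumL (supp g) (fun u => coef g u * meval x u).
Proof. rewrite peval_sumL. apply (support g (supp g) (fun u => meval x u)); auto using supp_nodup, supp_in. Qed.

Lemma peval_scale n e g c y : isF n e g -> length y = n ->
  peval g (map (fun v => c * v) y) = c ^ e * peval g y.
Proof. intros Fg Hy. rewrite !peval_supp, <- sumL_scal. apply sumL_ext; intros u _.
  destruct (Req_dec (coef g u) 0) as [E|E]. rewrite E; ring.
  destruct (Fg u E) as [Lu Du]. rewrite meval_scale by lia. rewrite Du; ring. Qed.

Lemma Lg_nonneg B g : 0 <= B -> 0 <= Lg B g.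
Proof. intros HB. unfold Lg. apply sumL_nonneg. intros t _. pose proof (Rabs_pos (fst t)).
  pose proof (pos_INR (deg (snd t))). pose proof (pow_le B (deg (snd t)) HB).
  apply Rmult_le_pos; auto. apply Rmult_le_pos; auto. Qed.

Lemma in_le_deg x b : In x b -> (x <= deg b)%nat.
Proof. induction b; simpl; intros H; [destruct H|]. fold (deg b). destruct H; subst; [lia|].
  specialize (IHb H); lia. Qed.

Lemma sumR_div b t : sumR (map (fun x => INR x / t) b) = INR (deg b) / t.
Proof. induction b; unfold sumR in *; simpl. unfold Rdiv; ring. fold (deg b).
  rewrite IHb, plus_INR. unfold Rdiv; ring. Qed.

Lemma g_lower n e g : (1 <= n)%nat -> isF n e g ->
  (forall x, in_Rplus_nonzero n x -> 0 < peval g x) ->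
  exists m, 0 < m /\ forall b, length b = n -> (1 <= deg b)%nat -> m * INR (deg b) ^ e <= peval g (map INR b).
Proof. intros Hn Fg Hpos.
  destruct (cube_min n (fun y => peval g (Ty y)) (Lg 2 g * (1 + INR n))) as [m [Hm Hm']].
  - apply Rmult_le_pos. apply Lg_nonneg; lra. pose proof (pos_INR n); lra.
  - intros y y' Hy Hy'. eapply Rle_trans. apply (peval_lip 2); [lra|eapply Ty_inbox; eauto|eapply Ty_inbox; eauto|].
    unfold Ty; rewrite !length_map. destruct Hy, Hy'; congruence.
    rewrite Rmult_assoc. apply Rmult_le_compat_l. apply Lg_nonneg; lra. apply Ty_lip; auto.
  - intros y Hy. apply Hpos, Ty_pos; auto.
  - exists m. split; auto. intros b Hb Hd.
    set (t := INR (deg b)). assert (Ht : 1 <= t) by (apply (le_INR 1); auto).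
    set (y := map (fun x => INR x / t) b).
    assert (Hy : incube y n).
    { split. unfold y; rewrite length_map; auto. unfold y. apply Forall_forall. intros z Hz.
      apply in_map_iff in Hz as [x [E Hx]]. subst. apply in_le_deg in Hx. apply le_INR in Hx.
      fold t in Hx. pose proof (pos_INR x). split.
      unfold Rdiv; apply Rmult_le_pos; [lra|apply Rlt_le, Rinv_0_lt_compat; lra]. apply (Rmult_le_reg_r t); [lra|]. unfold Rdiv.
      rewrite Rmult_assoc, Rinv_l by lra. lra. }
    specialize (Hm' y Hy). simpl in Hm'.
    assert (Sy : sh y = 0). { unfold sh, y. rewrite sumR_div. fold t. unfold Rdiv. rewrite Rinv_r by lra.
      unfold Rmax; destruct Rle_dec; lra. }
    assert (Ty y = y). { unfold Ty. rewrite Sy. rewrite <- map_id. apply map_ext. intros; ring. }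
    rewrite H in Hm'.
    assert (map INR b = map (fun v => t * v) y).
    { unfold y. rewrite map_map. apply map_ext. intros x. field. lra. }
    rewrite H0. rewrite (peval_scale n e g t y Fg) by (destruct Hy; auto).
    pose proof (pow_le t e ltac:(lra)). nra. Qed.

Lemma fact_le_pow N e : (fact (N + e) <= fact N * (N + e) ^ e)%nat.
Proof. induction e. rewrite Nat.add_0_r; simpl; lia.
  replace (N + S e)%nat with (S (N + e)) by lia. rewrite fact_simpl. cbn [Nat.pow].
  assert ((N + e) ^ e <= S (N + e) ^ e)%nat by (apply Nat.pow_le_mono_l; lia).
  eapply Nat.le_trans. apply Nat.mul_le_mono_l; exact IHe.
  replace (fact N * (S (N + e) * S (N + e) ^ e))%nat with (S (N + e) * (fact N * S (N + e) ^ e))%nat by ring.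
  apply Nat.mul_le_mono_l, Nat.mul_le_mono_l; auto. Qed.

Lemma M1_nonneg g : 0 <= M1 g.
Proof. unfold M1. apply sumL_nonneg; intros; apply Rabs_pos. Qed.

Lemma polya_strong n e g : (1 <= n)%nat -> is_poly n g -> isF n e g ->
  (forall x, in_Rplus_nonzero n x -> 0 < peval g x) ->
  exists N0 eps, 0 < eps /\ forall N, (N0 <= N)%nat -> forall w,
    eps * coef (SP n (N + e)) w <= coef (pmul (SP n N) g) w.
Proof. intros Hn Pg Fg Hpos.
  destruct (g_lower n e g Hn Fg Hpos) as [m [Hm Hlow]].
  set (C := M1 g * INR (e * e)).
  assert (HC : 0 <= C) by (unfold C; apply Rmult_le_pos; [apply M1_nonneg|apply pos_INR]).
  destruct (INR_unbounded (2 * C / m)) as [N1 HN1].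
  exists (S N1), (m / 2). split; [lra|]. intros N HN w.
  destruct (Req_dec (coef (SP n (N + e)) w) 0) as [Z|Z].
  - rewrite Z, Rmult_0_r. destruct (Req_dec (coef (pmul (SP n N) g) w) 0) as [Z2|Z2]. lra.
    destruct (isF_pmul n N e _ _ (SP_isF n N) Fg w Z2) as [Hl Hd].
    pose proof (SP_ge1 n (N + e) w Hl Hd). lra.
  - destruct (SP_isF n (N + e) w Z) as [Hl Hd].
    pose proof (polya_formula n e g Pg Fg N w Hl Hd) as PF. fold (SP n N) in PF.
    pose proof (SP_formula n (N + e) w Hl Hd) as SF.
    pose proof (Y_close n e g w Fg Hl) as YC. pose proof (Hlow w Hl ltac:(lia)) as LW.
    rewrite Hd in YC, LW. set (t := INR (N + e)) in *.
    assert (Ht : INR N1 < t). { unfold t. apply lt_INR. lia. }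
    assert (KEY : m / 2 * t ^ e <= Yg g w).
    { assert (C * t ^ (e - 1) <= m / 2 * t ^ e).
      { destruct e as [|e'].
        - unfold C. simpl. rewrite Rmult_0_r, Rmult_0_l. pose proof (pow_le t 0). simpl; lra.
        - replace (S e' - 1)%nat with e' by lia. simpl (t ^ S e').
          assert (2 * C / m < t) by lra.
          assert (C <= m / 2 * t). { apply (Rmult_lt_compat_r m) in H; [|lra]. unfold Rdiv in H.
            rewrite Rmult_assoc, Rinv_l, Rmult_1_r in H by lra. lra. }
          assert (0 <= t ^ e') by (apply pow_le; unfold t; apply pos_INR). nra. }
      unfold C in H. rewrite Rmult_assoc in H. lra. }
    pose proof (fact_le_pow N e) as FP. apply le_INR in FP. rewrite mult_INR, pow_INR in FP.
    fold t in FP. pose proof (fp_pos w) as FW. apply le_INR in FW. simpl in FW.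
    assert (0 < INR (fact N)) by (apply lt_0_INR, lt_O_fact).
    apply (Rmult_le_reg_r (INR (fp w))); [lra|].
    rewrite PF, Rmult_assoc, SF.
    assert (INR (fact N) * (m / 2 * t ^ e) <= INR (fact N) * Yg g w) by (apply Rmult_le_compat_l; lra).
    assert (m / 2 * INR (fact (N + e)) <= m / 2 * (INR (fact N) * t ^ e)) by (apply Rmult_le_compat_l; lra).
    nra. Qed.

Lemma fin_min_nat (P : nat -> R -> Prop) D :
  (forall a, (a <= D)%nat -> exists c, 0 < c /\ P a c) ->
  (forall a c c', P a c -> 0 < c' <= c -> P a c') ->
  exists c, 0 < c /\ forall a, (a <= D)%nat -> P a c.
Proof. intros H Hmono. induction D.
  - destruct (H 0%nat ltac:(lia)) as [c [Hc Pc]]. exists c; split; auto. intros a Ha.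
    replace a with 0%nat by lia; auto.
  - destruct IHD as [c1 [Hc1 P1]]. intros; apply H; lia.
    destruct (H (S D) ltac:(lia)) as [c2 [Hc2 P2]]. exists (Rmin c1 c2). split.
    unfold Rmin; destruct Rle_dec; lra. intros a Ha.
    destruct (Nat.eq_dec a (S D)). subst. apply (Hmono _ c2); auto. split; [unfold Rmin; destruct Rle_dec; lra| apply Rmin_r].
    apply (Hmono _ c1). apply P1; lia. split; [unfold Rmin; destruct Rle_dec; lra| apply Rmin_l]. Qed.

Lemma fin_min : forall k D (F : list nat -> R),
  (forall b, length b = k -> deg b = D -> 0 < F b) ->
  exists c, 0 < c /\ forall b, length b = k -> deg b = D -> c <= F b.
Proof. induction k; intros D F H.
  - destruct (Nat.eq_dec D 0).
    + exists (F []). split. apply H; auto. intros b Hb Hd. destruct b; [lra|discriminate].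
    + exists 1. split; [lra|]. intros b Hb Hd. destruct b; [simpl in Hd; lia|discriminate].
  - destruct (fin_min_nat (fun a c => forall b, length b = k -> deg b = (D - a)%nat -> c <= F (a :: b)) D)
      as [c [Hc Pc]].
    + intros a Ha. apply IHk. intros b Hb Hd. apply H. simpl; auto. simpl. fold (deg b). lia.
    + intros a c c' Hp Hc' b Hb Hd. specialize (Hp b Hb Hd). lra.
    + exists c. split; auto. intros b Hb Hd. destruct b as [|a b]; [discriminate|].
      simpl in Hd, Hb. fold (deg b) in Hd. apply Pc; lia. Qed.

Lemma coef_le_abs p w : Rabs (coef p w) <= sumL p (fun t => Rabs (fst t)).
Proof. rewrite coef_sumL. eapply Rle_trans. apply sumL_abs. apply sumL_le; intros t _.
  rewrite Rabs_mult. unfold ind; destruct list_eq_dec. rewrite Rabs_R1; lra.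
  rewrite Rabs_R0. pose proof (Rabs_pos (fst t)); lra. Qed.

Lemma abs_sum_nonneg (p : mpoly) : 0 <= sumL p (fun t => Rabs (fst t)).
Proof. apply sumL_nonneg; intros; apply Rabs_pos. Qed.

Lemma isF_zero n D p w : isF n D p -> ~ (length w = n /\ deg w = D) -> coef p w = 0.
Proof. intros F H. destruct (Req_dec (coef p w) 0); auto. exfalso; apply H, F; auto. Qed.

Lemma shape_dec n D w : {length w = n /\ deg w = D} + {~ (length w = n /\ deg w = D)}.
Proof. destruct (Nat.eq_dec (length w) n), (Nat.eq_dec (deg w) D); [left; auto|right; tauto..]. Qed.

Lemma pow_lower n p a k : 0 <= a -> ple [] p -> ple (scale a (SP n k)) p ->
  forall j, ple (scale (a ^ j) (SP n (j * k))) (ppow n p j).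
Proof. intros Ha Hp H j. induction j; intros w.
  - rewrite coef_scale. simpl. rewrite Rmult_1_l. apply Rle_refl.
  - change (ppow n p (S j)) with (pmul p (ppow n p j)).
    rewrite coef_scale. cbn [Nat.mul]. rewrite SP_add.
    eapply Rle_trans; [|apply (pmul_mono_r p _ _ Hp IHj)].
    rewrite pmul_scale_r, coef_scale.
    pose proof (pmul_mono_l (SP n (j * k)) _ _ (SP_nonneg n _) H w) as X.
    rewrite pmul_scale_l, coef_scale in X.
    pose proof (pow_le a j Ha). simpl (a ^ S j). nra. Qed.

Fixpoint Qp (n : nat) (u v : mpoly) (j : nat) : mpoly :=
  match j with
  | O => pone n
  | S j' => pmul u (Qp n u v j') ++ ppow n v (S j')
  end.

Lemma u_nonneg (u v : mpoly) (Hv0 : ple [] v) (Hvu : ple v u) : ple [] u.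
Proof. intros w; eapply Rle_trans; [apply Hv0|apply Hvu]. Qed.

Lemma Q_ident (n : nat) (u v SD : mpoly) (c' : R) (Pu : is_poly n u) (Pv : is_poly n v) (PSD : is_poly n SD) (Huv : forall w, coef u w = c' * coef SD w + coef v w) (Hv0 : ple [] v) (Hvu : ple v u) j : eqv (ppow n u (S j)) (scale c' (pmul SD (Qp n u v j)) ++ ppow n v (S j)).
Proof. induction j; intros w.
  - change (ppow n u 1) with (pmul u (pone n)). change (ppow n v 1) with (pmul v (pone n)).
    cbn [Qp]. rewrite coef_app, coef_scale, !pone_r; auto.
  - change (ppow n u (S (S j))) with (pmul u (ppow n u (S j))).
    change (ppow n v (S (S j))) with (pmul v (ppow n v (S j))). cbn [Qp].
    rewrite (pmul_eqv_r _ _ _ IHj), pmul_app_r, coef_app, pmul_scale_r, coef_scale.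
    rewrite coef_app, coef_scale, pmul_app_r, coef_app.
    assert (E1 : coef (pmul u (pmul SD (Qp n u v j))) w = coef (pmul SD (pmul u (Qp n u v j))) w).
    { rewrite <- pmul_assoc, (pmul_eqv_l _ _ _ (pmul_comm u SD)), pmul_assoc. auto. }
    assert (E2 : forall V, coef (pmul u V) w = c' * coef (pmul SD V) w + coef (pmul v V) w).
    { intros V. rewrite (pmul_eqv_l u (scale c' SD ++ v)). rewrite pmul_app_l, coef_app, pmul_scale_l, coef_scale; auto.
      intros x; rewrite coef_app, coef_scale; auto. }
    rewrite E1, E2. ring. Qed.

Lemma Q_nonneg (n : nat) (u v SD : mpoly) (c' : R) (Pu : is_poly n u) (Pv : is_poly n v) (PSD : is_poly n SD) (Huv : forall w, coef u w = c' * coef SD w + coef v w) (Hv0 : ple [] v) (Hvu : ple v u) j : ple [] (Qp n u v j).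
Proof. induction j; cbn [Qp]. apply ple_pone. intros w. rewrite coef_app.
  pose proof (pmul_nonneg _ _ (u_nonneg u v Hv0 Hvu) IHj w). pose proof (ppow_nonneg n v (S j) Hv0 w).
  simpl in *. lra. Qed.

Lemma Q_ge_u (n : nat) (u v SD : mpoly) (c' : R) (Pu : is_poly n u) (Pv : is_poly n v) (PSD : is_poly n SD) (Huv : forall w, coef u w = c' * coef SD w + coef v w) (Hv0 : ple [] v) (Hvu : ple v u) j : ple (ppow n u j) (Qp n u v j).
Proof. induction j; cbn [Qp]. intros w; apply Rle_refl. intros w. rewrite coef_app.
  pose proof (pmul_mono_r u _ _ (u_nonneg u v Hv0 Hvu) IHj w). pose proof (ppow_nonneg n v (S j) Hv0 w).
  change (ppow n u (S j)) with (pmul u (ppow n u j)). change (coef [] w) with 0 in H0. lra. Qed.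

Lemma Q_ge_v (n : nat) (u v SD : mpoly) (c' : R) (Pu : is_poly n u) (Pv : is_poly n v) (PSD : is_poly n SD) (Huv : forall w, coef u w = c' * coef SD w + coef v w) (Hv0 : ple [] v) (Hvu : ple v u) j : ple (scale (INR (S j)) (ppow n v j)) (Qp n u v j).
Proof. induction j; cbn [Qp]. intros w; rewrite coef_scale; change (INR 1) with 1; rewrite Rmult_1_l; apply Rle_refl. intros w. rewrite coef_app, coef_scale.
  pose proof (pmul_mono_l _ _ _ (Q_nonneg n u v SD c' Pu Pv PSD Huv Hv0 Hvu j) Hvu w).
  pose proof (pmul_mono_r v _ _ Hv0 IHj w). rewrite pmul_scale_r, coef_scale in H0.
  change (ppow n v (S j)) with (pmul v (ppow n v j)). rewrite S_INR.
  rewrite (S_INR j) in *. lra. Qed.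

Theorem mainTheorem4 (n d e : nat) (f g : mpoly) :
  is_form n d f -> is_form n e g ->
  nonconstant f -> strictly_pos_coefs n d f ->
  (forall x : list R, in_Rplus_nonzero n x -> 0 < peval g x) ->
  exists l : nat, (1 <= l)%nat /\
    strictly_pos_coefs n (l * d + e) (pmul (ppow n f l) g).
Proof.
  intros HfF HgF Hnc Hfpos Hgpos.
  pose proof (form_isF _ _ _ HfF) as Ff. pose proof (form_isF _ _ _ HgF) as Fg.
  destruct HfF as [Pf _]. destruct HgF as [Pg _].
  destruct Hnc as [w0 [Hw0 Hw0d]]. destruct (Ff w0 Hw0) as [Lw0 Dw0].
  assert (Hd : (1 <= d)%nat) by lia.
  assert (Hn : (1 <= n)%nat). { destruct n; [|lia]. destruct w0; [simpl in Hw0d; lia|discriminate]. }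
  destruct (fin_min n d (coef f) Hfpos) as [cf [Hcf Hcf']].
  set (c := cf / INR (fact d)).
  assert (Hfact : 0 < INR (fact d)) by (apply lt_0_INR, lt_O_fact).
  assert (Hc : 0 < c) by (unfold c; apply Rdiv_lt_0_compat; lra).
  assert (Hf0 : ple [] f).
  { intros w. change (coef [] w) with 0. destruct (shape_dec n d w) as [[H1 H2]|H].
    apply Rlt_le, Hfpos; auto. rewrite (isF_zero n d f w Ff H); lra. }
  assert (HfS : ple (scale c (SP n d)) f).
  { intros w. rewrite coef_scale. destruct (shape_dec n d w) as [[H1 H2]|H].
    - specialize (Hcf' w H1 H2). pose proof (SP_le n d w). pose proof (SP_nonneg n d w). simpl in H0.
      unfold c. apply (Rmult_le_reg_l (INR (fact d))); auto.
      replace (INR (fact d) * (cf / INR (fact d) * coef (SP n d) w)) with (cf * coef (SP n d) w) by (field; lra).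
      assert (cf * coef (SP n d) w <= cf * INR (fact d)) by (apply Rmult_le_compat_l; lra).
      assert (cf * INR (fact d) <= INR (fact d) * coef f w) by nra. lra.
    - rewrite (isF_zero n d f w Ff H), (isF_zero n d (SP n d) w (SP_isF n d) H). lra. }
  destruct (polya_strong n e g Hn Pg Fg Hgpos) as [N0 [eps [Heps Hpol]]].
  set (K := S N0). set (D := (K * d)%nat).
  assert (HD : (N0 <= D)%nat) by (unfold D, K; nia).
  set (u := ppow n f K).
  assert (Pu : is_poly n u) by (apply is_poly_ppow; auto).
  assert (Fu : isF n D u) by (apply isF_ppow; auto).
  set (c' := c ^ K). assert (Hc' : 0 < c') by (apply pow_lt; auto).
  assert (HuS : ple (scale c' (SP n D)) u) by (apply (pow_lower n f c d); auto; lra).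
  set (SD := SP n D).
  set (v := u ++ scale (- c') SD).
  assert (Huv : forall w, coef u w = c' * coef SD w + coef v w).
  { intros w. unfold v. rewrite coef_app, coef_scale. ring. }
  assert (Pv : is_poly n v) by (apply is_poly_app; auto; apply is_poly_scale, SP_poly).
  assert (Fv : isF n D v) by (apply isF_app; auto; apply isF_scale, SP_isF).
  assert (Hv0 : ple [] v).
  { intros w. change (coef [] w) with 0. specialize (HuS w). rewrite coef_scale in HuS.
    rewrite Huv in HuS. unfold SD in *. lra. }
  assert (Hvu : ple v u).
  { intros w. rewrite Huv. pose proof (SP_nonneg n D w). simpl in H. unfold SD. nra. }
  set (A := sumL u (fun t => Rabs (fst t))).
  assert (HA : 0 <= A) by apply abs_sum_nonneg.
  assert (HvA : ple v (scale A SD)).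
  { intros w. rewrite coef_scale. destruct (shape_dec n D w) as [[H1 H2]|H].
    - pose proof (SP_ge1 n D w H1 H2) as Q1. pose proof (Hvu w) as Q2. pose proof (coef_le_abs u w) as Q3.
      pose proof (Rle_abs (coef u w)) as Q4. unfold SD. fold A in Q3. nra.
    - rewrite (isF_zero n D v w Fv H), (isF_zero n D SD w (SP_isF n D) H). lra. }
  set (M := sumL g (fun t => Rabs (fst t))).
  assert (HM : 0 <= M) by apply abs_sum_nonneg.
  assert (HgM : ple (scale (- M) (SP n e)) g).
  { intros w. rewrite coef_scale. destruct (shape_dec n e w) as [[H1 H2]|H].
    - pose proof (SP_ge1 n e w H1 H2) as Q1. pose proof (coef_le_abs g w) as Q2.
      pose proof (Rle_abs (- coef g w)) as Q3. rewrite Rabs_Ropp in Q3. fold M in Q2. nra.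
    - rewrite (isF_zero n e g w Fg H), (isF_zero n e (SP n e) w (SP_isF n e) H). lra. }
  destruct (INR_unbounded (2 * M * A / (c' * eps))) as [j Hj].
  assert (Hj' : M * A <= c' * eps * INR (S j) / 2).
  { rewrite S_INR. assert (0 < c' * eps) by nra.
    apply (Rmult_lt_compat_r (c' * eps)) in Hj; auto. unfold Rdiv in Hj.
    rewrite Rmult_assoc, Rinv_l, Rmult_1_r in Hj by lra. pose proof (pos_INR j). nra. }
  exists (K * S j)%nat. split; [unfold K; nia|].
  intros w Hw Hdw.
  set (X := SP n (D + e)).
  set (Q := Qp n u v j).
  rewrite (pmul_eqv_l _ _ _ (ppow_mul n f K (S j) Pf)). fold u.
  rewrite (pmul_eqv_l _ _ _ (Q_ident n u v SD c' Pu Pv (SP_poly n D) Huv Hv0 Hvu j)).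
  rewrite pmul_app_l, coef_app, pmul_scale_l, coef_scale. fold Q.
  assert (E1 : coef (pmul (pmul SD Q) g) w = coef (pmul Q (pmul SD g)) w).
  { rewrite (pmul_eqv_l _ _ _ (pmul_comm SD Q)), pmul_assoc. auto. }
  assert (HP : ple (scale eps X) (pmul SD g)).
  { intros x. rewrite coef_scale. apply Hpol; auto. }
  pose proof (pmul_mono_r Q _ _ (Q_nonneg n u v SD c' Pu Pv (SP_poly n D) Huv Hv0 Hvu j) HP w) as P1.
  rewrite pmul_scale_r, coef_scale in P1.
  pose proof (pmul_mono_l X _ _ (SP_nonneg n _) (Q_ge_u n u v SD c' Pu Pv (SP_poly n D) Huv Hv0 Hvu j) w) as P2.
  pose proof (pmul_mono_l X _ _ (SP_nonneg n _) (Q_ge_v n u v SD c' Pu Pv (SP_poly n D) Huv Hv0 Hvu j) w) as P3.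
  rewrite pmul_scale_l, coef_scale in P3.
  pose proof (pmul_mono_l X _ _ (SP_nonneg n _) (pow_lower n u c' D (Rlt_le _ _ Hc') (u_nonneg u v Hv0 Hvu) HuS j) w) as P4.
  rewrite pmul_scale_l, coef_scale in P4. unfold X in P4. rewrite <- SP_add in P4.
  assert (Hdeg : deg w = (j * D + (D + e))%nat). { rewrite Hdw. unfold D. ring. }
  pose proof (SP_ge1 n _ w Hw Hdeg) as P5.
  assert (Hvj : ple [] (ppow n v j)) by (apply ppow_nonneg; auto).
  assert (Hvj1 : ple [] (ppow n v (S j))) by (apply ppow_nonneg; auto).
  pose proof (pmul_mono_r _ _ _ Hvj1 HgM w) as N1. rewrite pmul_scale_r, coef_scale in N1.
  assert (E2 : coef (pmul (ppow n v (S j)) (SP n e)) w = coef (pmul (ppow n v j) (pmul v (SP n e))) w).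
  { change (ppow n v (S j)) with (pmul v (ppow n v j)).
    rewrite (pmul_eqv_l _ _ _ (pmul_comm v (ppow n v j))), pmul_assoc. auto. }
  pose proof (pmul_mono_l (SP n e) _ _ (SP_nonneg n e) HvA) as N2.
  pose proof (pmul_mono_r _ _ _ Hvj N2 w) as N3.
  rewrite (pmul_eqv_r _ _ _ (pmul_scale_l A SD (SP n e))), pmul_scale_r, coef_scale in N3.
  unfold SD in N3. rewrite <- (pmul_eqv_r _ _ _ (SP_add n D e)) in N3. fold X in N3.
  pose proof (Hvj w) as N4. pose proof (pmul_nonneg _ _ Hvj (SP_nonneg n (D + e)) w) as N5.
  change (coef [] w) with 0 in N5. fold X in N5.
  rewrite E1. rewrite E2 in N1.
  fold Q in P2, P3. fold X in P4.
  set (q := coef (pmul Q X) w) in *.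
  set (a1 := coef (pmul (ppow n u j) X) w) in *.
  set (b1 := coef (pmul (ppow n v j) X) w) in *.
  set (s := coef (SP n (j * D + (D + e))) w) in *.
  assert (Hcj : 0 < c' ^ j) by (apply pow_lt; auto).
  assert (H1 : c' ^ j <= q). { assert (c' ^ j * 1 <= c' ^ j * s) by (apply Rmult_le_compat_l; lra). lra. }
  assert (H2 : INR (S j) * b1 <= q) by lra.
  assert (Hce : 0 < c' * eps) by (apply Rmult_lt_0_compat; lra).
  assert (G1 : c' * (eps * q) <= c' * coef (pmul Q (pmul SD g)) w) by (apply Rmult_le_compat_l; lra).
  assert (G2 : c' * eps * c' ^ j <= c' * eps * q) by (apply Rmult_le_compat_l; lra).
  assert (G3 : c' * eps * (INR (S j) * b1) <= c' * eps * q) by (apply Rmult_le_compat_l; lra).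
  assert (G4 : M * A * b1 <= c' * eps * INR (S j) / 2 * b1) by (apply Rmult_le_compat_r; lra).
  assert (G5 : M * coef (pmul (ppow n v j) (pmul v (SP n e))) w <= M * (A * b1)) by (apply Rmult_le_compat_l; lra).
  assert (G6 : 0 < c' * eps * c' ^ j) by (apply Rmult_lt_0_compat; lra).
  lra.
Qed.
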